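(* Let $L$ be a planar semimodular lattice with more than two elements and let $R$ be a rectangular extension of $L$. Then $R$ is a congruence-preserving extension of $L$, that is, the map $\mathrm{Con}\,R\to\mathrm{Con}\,L$, $\alpha\mapsto\alpha\cap(L\times L)$, is a lattice isomorphism.
   Context: All lattices are finite. A planar lattice is a finite lattice that has a planar Hasse diagram. For a planar diagram $D$ of a planar lattice, $C_l(D)$ and $C_r(D)$ denote its left and right boundary chains. A rectangular lattice is a planar semimodular lattice $R$ having a planar diagram $D$ such that $C_l(D)\setminus\{0,1\}$ contains exactly one element that is doubly irreducible in $R$ (the left corner $c_l$), $C_r(D)\setminus\{0,1\}$ contains exactly one doubly irreducible element (the right corner $c_r$), and $c_l\wedge c_r=0$, $c_l\vee c_r=1$. A rectangular extension of a planar semimodular lattice $L$ is a lattice $R$ such that: (a) $R$ is rectangular; (b) $L$ is a cover-preserving $\{0,1\}$-sublattice of $R$ (a sublattice containing $0_R,1_R$ such that $x\prec y$ in $L$ implies $x\prec y$ in $R$); (c) every $x\in R$ that has a lower cover outside $L$ has at most two lower covers in $R$. *)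

(* Defs.v *)
From HB Require Import structures.
From mathcomp Require Import all_boot all_order all_algebra.
Set Implicit Arguments. Unset Strict Implicit. Unset Printing Implicit Defensive.
Import Order.Theory GRing.Theory Num.Theory.

Section LatticeNotions.
Context {d : Order.disp_t} {T : finTBLatticeType d}.
Local Open Scope order_scope.

Definition covers (x y : T) : bool :=
  (x < y) && [forall z : T, ~~ ((x < z) && (z < y))].

Definition lower_covers (x : T) : {set T} := [set y | covers y x].
Definition upper_covers (x : T) : {set T} := [set y | covers x y].

(* In a finite lattice: join-irreducible = exactly one lower cover,
   meet-irreducible = exactly one upper cover. *)
Definition join_irreducible (x : T) : bool := #|lower_covers x| == 1%N.
Definition meet_irreducible (x : T) : bool := #|upper_covers x| == 1%N.
Definition doubly_irreducible (x : T) : bool :=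
  join_irreducible x && meet_irreducible x.

Definition semimodular : Prop :=
  forall a b c : T, covers a b ->
    (a `|` c == b `|` c) || covers (a `|` c) (b `|` c).

Definition is_congruence (th : {set T * T}) : Prop :=
  [/\ forall x, (x, x) \in th,
      forall x y, (x, y) \in th -> (y, x) \in th,
      forall x y z, (x, y) \in th -> (y, z) \in th -> (x, z) \in th &
      forall x y u v, (x, y) \in th -> (u, v) \in th ->
        ((x `&` u, y `&` v) \in th) /\ ((x `|` u, y `|` v) \in th)].

(* lattice operations in Con T: meet = intersection,
   join = least congruence containing both *)
Definition cong_meet (th1 th2 : {set T * T}) : {set T * T} := th1 :&: th2.
Definition cong_join (th1 th2 : {set T * T}) : {set T * T} :=
  [set p : T * T | [forall g : {set T * T},
     [forall q : T * T, (q \in th1 :|: th2) ==> (q \in g)] ==>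
     (([forall x : T, (x, x) \in g]) &&
      [forall x : T, forall y : T, ((x, y) \in g) ==> ((y, x) \in g)] &&
      [forall x : T, forall y : T, forall z : T,
          ((x, y) \in g) && ((y, z) \in g) ==> ((x, z) \in g)] &&
      [forall x : T, forall y : T, forall u : T, forall v : T,
          ((x, y) \in g) && ((u, v) \in g) ==>
          ((x `&` u, y `&` v) \in g) && ((x `|` u, y `|` v) \in g)])
     ==> (p \in g)]].

Local Open Scope ring_scope.
Variable F : realFieldType.

(* A diagram: element x is drawn at the point (X x, Y x); each covering
   pair a ≺ b is drawn as the straight segment from (X a,Y a) to (X b,Y b). *)
Definition segX (X : T -> F) (a b : T) (s : F) : F := (1 - s) * X a + s * X b.
Definition segY (Y : T -> F) (a b : T) (s : F) : F := (1 - s) * Y a + s * Y b.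

Definition planar_diagram (X Y : T -> F) : Prop :=
  [/\
      forall x y : T, X x = X y -> Y x = Y y -> x = y,
      forall a b : T, covers a b -> Y a < Y b,
      forall a b c : T, covers a b -> c != a -> c != b ->
        forall s : F, 0 <= s <= 1 -> ~ (segX X a b s = X c /\ segY Y a b s = Y c) &
      forall a b c e : T, covers a b -> covers c e -> (a, b) != (c, e) ->
        forall s t : F, 0 <= s <= 1 -> 0 <= t <= 1 ->
          segX X a b s = segX X c e t -> segY Y a b s = segY Y c e t ->
          exists2 v : T, (v \in [:: a; b]) && (v \in [:: c; e]) &
                          (segX X a b s = X v /\ segY Y a b s = Y v)].

(* Left boundary chain C_l(D): the elements x such that the open horizontal
   ray going to the left from x meets neither a vertex nor an edge of D. *)
Definition in_left_boundary (X Y : T -> F) (x : T) : Prop :=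
  (forall y : T, Y y = Y x -> ~ (X y < X x)) /\
  (forall a b : T, covers a b -> forall s : F, 0 <= s <= 1 ->
      segY Y a b s = Y x -> ~ (segX X a b s < X x)).
Definition in_right_boundary (X Y : T -> F) (x : T) : Prop :=
  (forall y : T, Y y = Y x -> ~ (X x < X y)) /\
  (forall a b : T, covers a b -> forall s : F, 0 <= s <= 1 ->
      segY Y a b s = Y x -> ~ (X x < segX X a b s)).

End LatticeNotions.

Local Open Scope order_scope.

(* A finite lattice is planar if it has a planar Hasse diagram (coordinates
   in some ordered field; by Tarski transfer this is equivalent to R^2). *)
Definition planar_lattice {d} (T : finTBLatticeType d) : Prop :=
  exists (F : realFieldType) (X Y : T -> F), planar_diagram X Y.

Definition rectangular_lattice {d} (T : finTBLatticeType d) : Prop :=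
  semimodular (T := T) /\
  exists (F : realFieldType) (X Y : T -> F),
    planar_diagram X Y /\
    exists cl cr : T,
      [/\
          forall z : T, [/\ in_left_boundary X Y z, z != \bot, z != \top &
                        doubly_irreducible z] <-> z = cl,
          forall z : T, [/\ in_right_boundary X Y z, z != \bot, z != \top &
                        doubly_irreducible z] <-> z = cr,
          cl `&` cr = \bot & cl `|` cr = \top].

(* R is a rectangular extension of L, where L is identified with its image
   under the embedding f : L -> R. *)
Definition rectangular_extension {dL dR}
    (L : finTBLatticeType dL) (R : finTBLatticeType dR) (f : L -> R) : Prop :=
  [/\ rectangular_lattice R,
      injective f /\ (forall x y : L, f (x `&` y) = f x `&` f y /\ f (x `|` y) = f x `|` f y),
      (f \bot = \bot /\ f \top = \top),
      (forall x y : L, covers x y -> covers (f x) (f y)) &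
      forall x : R, (exists2 y : R, covers y x & y \notin codom f) ->
        (#|lower_covers x| <= 2)%N].

Definition restrict_cong {dL dR} {L : finTBLatticeType dL}
    {R : finTBLatticeType dR} (f : L -> R) (th : {set R * R}) : {set L * L} :=
  [set p : L * L | (f p.1, f p.2) \in th].

Definition congruence_preserving_ext {dL dR}
    (L : finTBLatticeType dL) (R : finTBLatticeType dR) (f : L -> R) : Prop :=
  [/\
      forall th : {set R * R}, is_congruence th -> is_congruence (restrict_cong f th),
      forall th1 th2 : {set R * R}, is_congruence th1 -> is_congruence th2 ->
        restrict_cong f th1 = restrict_cong f th2 -> th1 = th2,
      forall ps : {set L * L}, is_congruence ps ->
        exists2 th : {set R * R}, is_congruence th & restrict_cong f th = ps,
      forall th1 th2 : {set R * R}, is_congruence th1 -> is_congruence th2 ->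
        restrict_cong f (cong_meet th1 th2)
        = cong_meet (restrict_cong f th1) (restrict_cong f th2) &
      forall th1 th2 : {set R * R}, is_congruence th1 -> is_congruence th2 ->
        restrict_cong f (cong_join th1 th2)
        = cong_join (restrict_cong f th1) (restrict_cong f th2)].

(* Main.v *)
Require Import Defs.
From HB Require Import structures.
From mathcomp Require Import all_boot all_order all_algebra.
From mathcomp Require Import zify.
Set Implicit Arguments. Unset Strict Implicit. Unset Printing Implicit Defensive.
Import Order.Theory.
Local Open Scope order_scope.


Section Basics.
Context {d : Order.disp_t} {R : finTBLatticeType d}.
Implicit Types (x y z : R).

Definition down x : {set R} := [set t | t <= x].

Lemma down_lt x y : x < y -> (#|down x| < #|down y|)%N.
Proof.
move=> lt; apply: proper_card; apply/properP; split.
  apply/subsetP=> t; rewrite !inE => h; exact: le_trans h (ltW lt).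
exists y; rewrite !inE ?lexx //. by rewrite (lt_geF lt).
Qed.

Lemma ex_max (P : pred R) w : P w -> exists2 c, P c & forall z, P z -> ~ (c < z).
Proof.
move=> Pw; case: (@fintype.arg_maxnP R w P (fun c => #|down c|) Pw) => c Pc mx.
exists c => // z Pz lt; have := mx z Pz; by rewrite /= leqNgt (down_lt lt).
Qed.

Lemma ex_min (P : pred R) w : P w -> exists2 c, P c & forall z, P z -> ~ (z < c).
Proof.
move=> Pw; case: (@fintype.arg_minnP R w P (fun c => #|down c|) Pw) => c Pc mx.
exists c => // z Pz lt; have := mx z Pz; rewrite leqNgt /= (down_lt lt) //.
Qed.

Lemma coversP x y : reflect (x < y /\ forall z, x < z -> z < y -> False) (covers x y).
Proof.
apply: (iffP andP) => [[lt /forallP h]|[lt h]]; split => //.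
  by move=> z a b; have := h z; rewrite a b.
by apply/forallP=> z; apply/negP=> /andP[a b]; exact: h a b.
Qed.

End Basics.


Section Main.
Context {d : Order.disp_t} {R : finTBLatticeType d}.
Implicit Types (a b c m p q r t u v w x y z : R).

Lemma covers_lt x y : covers x y -> x < y.
Proof. by case/coversP. Qed.

Lemma covers_mid a c z : covers a c -> a <= z -> z <= c -> z = a \/ z = c.
Proof.
case/coversP=> _ h az zc.
case: (eqVneq z a) => [-> | na]; first by left.
case: (eqVneq z c) => [-> | nc]; first by right.
exfalso; apply: (h z); [by rewrite lt_neqAle eq_sym na az | by rewrite lt_neqAle nc zc].
Qed.

Lemma ex_cov_below (A : {set R}) w b : w \in A -> w < b ->
  exists c, [/\ c \in A, w <= c, c < b & forall z, z \in A -> c < z -> z < b -> False].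
Proof.
move=> wA wb.
case: (@ex_max _ R (fun c : R => [&& c \in A, w <= c & c < b]) w);
  first by rewrite wA lexx wb.
move=> c /and3P[cA wc cb] mx.
exists c; split=> // z zA cz zb; apply: (mx z _ cz).
by rewrite zA zb (le_trans wc (ltW cz)).
Qed.

Lemma ex_cov_above (A : {set R}) m z : z \in A -> m < z ->
  exists c, [/\ c \in A, m < c, c <= z & forall t, t \in A -> m < t -> t < c -> False].
Proof.
move=> zA mz.
case: (@ex_min _ R (fun c : R => [&& c \in A, m < c & c <= z]) z);
  first by rewrite zA mz lexx.
move=> c /and3P[cA mc cz] mn.
exists c; split=> // t tA mt tc; apply: (mn t _ tc).
by rewrite tA mt (le_trans (ltW tc) cz).
Qed.

Lemma lower_cover_of w b : w < b -> exists2 c : R, w <= c & covers c b.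
Proof.
move=> wb; have [c [_ wc cb h]] := @ex_cov_below [set: R] w b (in_setT _) wb.
by exists c => //; apply/coversP; split=> // z; apply: h; rewrite in_setT.
Qed.

Lemma upper_cover_of m z : m < z -> exists2 c : R, covers m c & c <= z.
Proof.
move=> mz; have [c [_ mc cz h]] := @ex_cov_above [set: R] m z (in_setT _) mz.
by exists c => //; apply/coversP; split=> // t; apply: h; rewrite in_setT.
Qed.

Lemma three_lc t p q r : covers p t -> covers q t -> covers r t ->
  p != q -> p != r -> q != r -> (2 < #|lower_covers t|)%N.
Proof.
move=> cp cq cr pq pr qr.
have sub : p |: (q |: [set r]) \subset lower_covers t.
  by apply/subsetP=> u; rewrite !inE => /or3P[] /eqP->.
apply: leq_trans (subset_leq_card sub).
by rewrite !cardsU1 cards1 !inE negb_or pq pr qr.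
Qed.

Hypothesis semi : semimodular (T := R).

Lemma semiP a b c : covers a b -> a `|` c = b `|` c \/ covers (a `|` c) (b `|` c).
Proof. by move=> h; case/orP: (semi c h) => [/eqP|]; [left|right]. Qed.

Lemma LC p q b : covers p b -> covers q b -> p != q ->
  (forall w, w < b -> w <= p \/ w <= q) -> covers (p `&` q) p.
Proof.
move=> pb qb pq E.
have mp : p `&` q < p.
  rewrite lt_neqAle leIl andbT; apply/negP=> /eqP/meet_idPl pleq.
  case/coversP: pb => _ h; apply: (h q _ (covers_lt qb)).
  by rewrite lt_neqAle pq pleq.
have mq : p `&` q < q.
  rewrite lt_neqAle leIr andbT; apply/negP=> /eqP qe.
  have qlep : q <= p by rewrite -qe leIl.
  case/coversP: qb => _ h; apply: (h p _ (covers_lt pb)).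
  by rewrite lt_neqAle eq_sym pq qlep.
apply/coversP; split=> // z mz zp.
have [z' mz' z'z] := upper_cover_of mz.
have [w' mw' w'q] := upper_cover_of mq.
have z'p : z' < p := le_lt_trans z'z zp.
have notw : ~~ (w' <= p).
  apply/negP=> w'p; have : w' <= p `&` q by rewrite lexI w'p w'q.
  by move/(lt_le_trans (covers_lt mw')); rewrite ltxx.
have notz : ~~ (z' <= q).
  apply/negP=> z'q; have : z' <= p `&` q by rewrite lexI (ltW z'p) z'q.
  by move/(lt_le_trans (covers_lt mz')); rewrite ltxx.
case: (semiP z' mw') => [e|cz].
  move: e; rewrite join_r ?(ltW (covers_lt mz')) // => e.
  by move: notw; rewrite (le_trans _ (ltW z'p)) // e leUl.
have tb : w' `|` z' <= b.
  by rewrite leUx (le_trans w'q (ltW (covers_lt qb))) (le_trans (ltW z'p) (ltW (covers_lt pb))).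
move: cz; rewrite join_r ?(ltW (covers_lt mz')) // => cz.
case: (eqVneq (w' `|` z') b) => [e | ne].
  by case/coversP: cz => _ h; apply: (h p) => //; rewrite e (covers_lt pb).
have tlt : w' `|` z' < b by rewrite lt_neqAle ne tb.
case: (E _ tlt) => h.
  by move: notw; rewrite (le_trans (leUl _ _) h).
by move: notz; rewrite (le_trans (leUr _ _) h).
Qed.


Definition sub (S : {set R}) : Prop :=
  [/\ \bot \in S, \top \in S &
      forall a b, a \in S -> b \in S -> (a `&` b \in S) /\ (a `|` b \in S)].

Definition cp (S : {set R}) : Prop :=
  forall a b, a \in S -> b \in S -> a < b ->
    (forall z, z \in S -> a < z -> z < b -> False) -> covers a b.

Record good (S : {set R}) x m y b : Prop := Good {
 gx : x \notin S; gm : m \in S; gy : y \in S; gb : b \in S;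
 gmx : covers m x; gxb : covers x b; gmeet : x `&` y = m; gjoin : x `|` y = b;
 gup : forall z, z \in S -> x <= z -> b <= z;
 gdn : forall z, z \in S -> z <= x -> z <= m;
 gI : forall z, z \in S -> ~~ (x <= z) -> x `&` z \in S;
 gU : forall z, z \in S -> ~~ (z <= x) -> x `|` z \in S;
 gi : forall z, z \in S -> ~~ (x <= z) -> b `&` z <= y;
 gii : forall z, z \in S -> ~~ (z <= x) -> y <= m `|` z }.

Variable L0 : {set R}.
Hypothesis hc : forall t : R,
  (exists2 w, covers w t & w \notin L0) -> (#|lower_covers t| <= 2)%N.

Lemma choose_x (S : {set R}) : L0 \subset S -> sub S -> cp S -> (exists x0, x0 \notin S) ->
  exists x m y b, good S x m y b.
Proof.
move=> L0S [S0 S1 SIU] cpS [x0 x0S].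
have SI a b : a \in S -> b \in S -> a `&` b \in S by move=> ha hb; case: (SIU a b ha hb).
have SU a b : a \in S -> b \in S -> a `|` b \in S by move=> ha hb; case: (SIU a b ha hb).
have notL0 w : w \notin S -> w \notin L0.
  by move=> wS; apply/negP=> /(subsetP L0S); apply/negP.
case: (@ex_min _ R (fun b : R => (b \in S) && [exists w, (w <= b) && (w \notin S)]) \top).
  by rewrite S1 /=; apply/existsP; exists x0; rewrite lex1 x0S.
move=> b /andP[bS /existsP[w0 /andP[w0b w0S]]] bmin.
have Min c w : c \in S -> c < b -> w <= c -> w \in S.
  move=> cS cb wc; apply/negPn/negP=> wS; apply: (bmin c) cb.
  by rewrite cS; apply/existsP; exists w; rewrite wc wS.
case: (@ex_max _ R (fun x : R => (x <= b) && (x \notin S)) w0); first by rewrite w0b w0S.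
move=> x /andP[xb xS] xmax.
have xneb : x != b by apply/negP=> /eqP xe; move: xS; rewrite xe bS.
have xltb : x < b by rewrite lt_neqAle xneb xb.
have up z : z \in S -> x <= z -> b <= z.
  move=> zS xz; case: (eqVneq (z `&` b) b) => [<-|ne]; first exact: leIl.
  have zbb : z `&` b < b by rewrite lt_neqAle ne leIr.
  by move: xS; rewrite (Min _ x (SI _ _ zS bS) zbb) // lexI xz xb.
have xcb : covers x b.
  apply/coversP; split=> // z xz zb.
  case: (boolP (z \in S)) => zS.
    by move: (up z zS (ltW xz)); rewrite (lt_geF zb).
  by apply: (xmax z) xz; rewrite (ltW zb) zS.
have botb : \bot < b := le_lt_trans (le0x x) xltb.
have [y [yS _ yb ycov]] := ex_cov_below S0 botb.
have ycb : covers y b by apply: cpS.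
have xney : x != y by apply/negP=> /eqP e; move: xS; rewrite e yS.
have D w : covers w b -> w = x \/ w = y.
  move=> wb; case: (eqVneq w x) => [->|wx]; first by left.
  case: (eqVneq w y) => [->|wy]; first by right.
  have := hc (ex_intro2 (fun w => covers w b) (fun w => w \notin L0) _ xcb (notL0 _ xS)).
  by rewrite leqNgt (three_lc xcb ycb wb xney) // eq_sym.
have E w : w < b -> w <= x \/ w <= y.
  by case/lower_cover_of=> c wc /D [] <-; [left|right].
have Sy s : s \in S -> s < b -> s <= y.
  move=> sS sb; have [c [cS sc cb ch]] := ex_cov_below sS sb.
  have := D c (cpS _ _ cS bS cb ch); case=> ce; last by rewrite -ce.
  by move: xS; rewrite -ce cS.
pose m := x `&` y.
have mS : m \in S by apply: (Min y) => //; rewrite ?(covers_lt ycb) ?leIr.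
have mx : covers m x by apply: (LC xcb ycb xney E).
have my : covers m y.
  rewrite /m meetC; apply: (LC ycb xcb); first by rewrite eq_sym.
  by move=> w h; case: (E w h); [right|left].
have dn z : z \in S -> z <= x -> z <= m.
  move=> zS zx; rewrite lexI zx; apply: Sy zS (le_lt_trans zx xltb).
have gI' z : z \in S -> ~~ (x <= z) -> x `&` z \in S.
  move=> zS nxz; have ne : z `&` b != b.
    by apply/negP=> /eqP e; move: nxz; rewrite (le_trans xb) // -e leIl.
  apply: (Min (z `&` b)); rewrite ?SI // ?lt_neqAle ?ne ?leIr //.
  by rewrite lexI leIr (le_trans (leIl _ _) xb).
have gi' z : z \in S -> ~~ (x <= z) -> b `&` z <= y.
  move=> zS nxz; have ne : b `&` z != b.
    by apply/negP=> /eqP e; move: nxz; rewrite (le_trans xb) // -e leIr.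
  by apply: Sy; rewrite ?SI // lt_neqAle ne leIl.
have xyb : x `|` y = b.
  have hxy : x `|` y <= b by rewrite leUx xb (ltW (covers_lt ycb)).
  case: (covers_mid xcb (leUl x y) hxy) => // /join_idPl yx; exfalso.
  case/coversP: ycb => _ h; apply: (h x) => //.
  by rewrite lt_neqAle eq_sym xney yx.
have gU' a : a \in S -> ~~ (a <= x) -> x `|` a \in S.
  move=> aS nax.
  have key : b <= x `|` a -> x `|` a \in S.
    move=> bxa; suff -> : x `|` a = b `|` a by apply: SU.
    apply/le_anti; rewrite !leUx (le_trans xb (leUl _ _)) !leUr bxa //.
  case: (boolP (a `&` b <= x)) => hab; last first.
    apply: key.
    have hb2 : x `|` (a `&` b) <= b by rewrite leUx xb leIr.
    case: (covers_mid xcb (leUl x (a `&` b)) hb2) => [/join_idPl abx|e].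
      by rewrite abx in hab.
    by rewrite -e leUx leUl (le_trans (leIl _ _) (leUr _ _)).
  have abm : a `&` b <= m := dn _ (SI _ _ aS bS) hab.
  case: (boolP (x `|` a \in S)) => // xaS; exfalso.
  have mlex : m <= x by rewrite /m leIl.
  have mley : m <= y by rewrite /m leIr.
  case: (boolP (y <= x `|` a)) => hy.
    by move: xaS; rewrite key // -xyb leUx leUl hy.
  have mle : m `|` a <= x `|` a by rewrite leUx (le_trans mlex (leUl _ _)) leUr.
  case: (semiP a mx) => [e1|c1].
    by move: xaS; rewrite -e1 SU.
  case: (semiP a my) => [e2|c2].
    by move: hy; rewrite (le_trans (leUl y a)) // -e2.
  have ne : x `|` a != y `|` a.
    by apply/negP=> /eqP e; move: hy; rewrite e leUl.
  have noxy : ~~ (x `|` a <= y `|` a).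
    apply/negP=> le1; case: (covers_mid c2 (ltW (covers_lt c1)) le1) => e.
      by move: (covers_lt c1); rewrite e ltxx.
    by rewrite e eqxx in ne.
  case: (semiP (y `|` a) c1) => [e3|c3].
    move: noxy; rewrite (join_r (ltW (covers_lt c2))) in e3.
    by rewrite e3 leUl.
  rewrite (join_r (ltW (covers_lt c2))) in c3.
  case: (semiP (x `|` a) c2) => [e4|c4].
    rewrite (join_r (ltW (covers_lt c1))) in e4.
    by move: hy; rewrite (le_trans (leUl y a)) // e4 leUl.
  rewrite (join_r (ltW (covers_lt c1))) [X in covers _ X]joinC in c4.
  set t := (x `|` a) `|` (y `|` a) in c3 c4.
  have bt : b <= t by rewrite -xyb leUx (le_trans (leUl x a) (leUl _ _))
                          (le_trans (leUl y a) (leUr _ _)).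
  have bnet : b != t.
    apply/negP=> /eqP e.
    have ab : a <= b by rewrite e /t (le_trans (leUr a x) (leUl _ _)).
    have ax : a <= x by move: hab; rewrite (meet_l ab).
    by rewrite ax in nax.
  have btl : b < t by rewrite lt_neqAle bnet bt.
  have [v bv vt] := lower_cover_of btl.
  have v1 : x `|` a != v.
    by apply/negP=> /eqP e; move: hy; rewrite e (le_trans _ bv) // -xyb leUr.
  have v2 : y `|` a != v.
    apply/negP=> /eqP e.
    have : x `|` a <= y `|` a by rewrite leUx leUr andbT e (le_trans _ bv) // -xyb leUl.
    by rewrite (negbTE noxy).
  have := hc (ex_intro2 (fun w => covers w t) (fun w => w \notin L0) _ c4 (notL0 _ xaS)).
  by rewrite leqNgt (three_lc c4 c3 vt ne v1 v2).
have mlex : m <= x by rewrite /m leIl.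
have gii' z : z \in S -> ~~ (z <= x) -> y <= m `|` z.
  move=> zS nzx.
  have mw : m < m `|` z.
    rewrite lt_neqAle leUl andbT; apply/negP=> /eqP/esym/join_idPl zm.
    by move: nzx; rewrite (le_trans zm mlex).
  have [v [vS mv vw vh]] := ex_cov_above (SU _ _ mS zS) mw.
  have mcv : covers m v := cpS _ _ mS vS mv vh.
  suff -> : y = v by [].
  case: (eqVneq v y) => [//|vy]; exfalso.
  have vx : ~~ (v <= x).
    by apply/negP=> vx; move: (dn _ vS vx); move/(lt_le_trans mv); rewrite ltxx.
  case: (semiP x mcv) => [e|c].
    rewrite (join_r mlex) in e; by move: vx; rewrite e leUl.
  rewrite (join_r mlex) in c.
  have vxS : v `|` x \in S by rewrite joinC gU'.
  have bvx : b <= v `|` x := up _ vxS (leUr _ _).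
  have vxb : v `|` x = b.
    case: (covers_mid c xb bvx) => e; last by [].
    by rewrite e eqxx in xneb.
  case: (semiP v mx) => [e|c'].
    rewrite (join_r (ltW mv)) joinC vxb in e.
    by case/coversP: mcv => _ h; apply: (h x (covers_lt mx)); rewrite e.
  rewrite (join_r (ltW mv)) joinC vxb in c'.
  case: (D _ c') => e; last by rewrite e eqxx in vy.
  by move: xS; rewrite -e vS.
exists x, m, y, b; split=> //.
Qed.


Definition cong_on (S : {set R}) (th : {set R * R}) : Prop :=
  [/\ forall a, a \in S -> (a, a) \in th,
      forall a c, a \in S -> c \in S -> (a, c) \in th -> (c, a) \in th,
      forall a c e, a \in S -> c \in S -> e \in S -> (a, c) \in th -> (c, e) \in th -> (a, e) \in th &
      forall a c u v, a \in S -> c \in S -> u \in S -> v \in S -> (a, c) \in th -> (u, v) \in th ->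
        ((a `&` u, c `&` v) \in th) /\ ((a `|` u, c `|` v) \in th)].

Lemma cong_onT (S : {set R}) th : is_congruence th -> cong_on S th.
Proof. by case=> h1 h2 h3 h4; split=> *; [apply: h1|apply: h2|apply: h3; eauto|apply: h4]. Qed.

Lemma congT th : cong_on [set: R] th -> is_congruence th.
Proof.
case=> h1 h2 h3 h4; split=> *; [apply: h1|apply: h2|apply: h3|apply: h4]; rewrite ?in_setT //; eauto.
Qed.

Lemma cong_conv (S : {set R}) th p q r : cong_on S th -> p \in S -> q \in S -> r \in S ->
  p <= q -> q <= r -> (p, r) \in th -> (p, q) \in th.
Proof.
case=> h1 h2 h3 h4 pS qS rS pq qr pr.
have [_ /=] := h4 _ _ _ _ pS rS qS qS pr (h1 _ qS).
rewrite (join_r pq) (join_l qr) => qr'.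
by apply: h3 pr (h2 _ _ qS rS qr') => //.
Qed.


Section Step.
Variables (S : {set R}) (x m y b : R).
Hypothesis G : good S x m y b.
Hypothesis subS : sub S.

Let mS := gm G. Let yS := gy G. Let bS := gb G.
Lemma mlex : m <= x. Proof. by rewrite -(gmeet G) leIl. Qed.
Lemma mley : m <= y. Proof. by rewrite -(gmeet G) leIr. Qed.
Lemma xleb : x <= b. Proof. exact: ltW (covers_lt (gxb G)). Qed.
Lemma yleb : y <= b. Proof. by rewrite -(gjoin G) leUr. Qed.
Lemma mleb : m <= b. Proof. exact: le_trans mlex xleb. Qed.

Lemma SI' a c : a \in S -> c \in S -> a `&` c \in S.
Proof. by case: subS => _ _ h ha hc0; case: (h a c ha hc0). Qed.
Lemma SU' a c : a \in S -> c \in S -> a `|` c \in S.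
Proof. by case: subS => _ _ h ha hc0; case: (h a c ha hc0). Qed.

Lemma neqx z : z \in S -> (z == x) = false.
Proof. by move=> zS; apply/negP=> /eqP e; move: (gx G); rewrite -e zS. Qed.

Lemma meetx z : z \in S -> x `&` z = if x <= z then x else m `&` z.
Proof.
move=> zS; case: ifPn => [/meet_l //| nxz].
have h := gI G zS nxz; have h2 := gdn G h (leIl _ _).
apply/le_anti; rewrite !lexI h2 leIr (le_trans (leIl _ _) mlex) leIr //.
Qed.

Lemma joinx z : z \in S -> x `|` z = if z <= x then x else b `|` z.
Proof.
move=> zS; case: ifPn => [/join_l //| nzx].
have h := gU G zS nzx; have h2 := gup G h (leUl _ _).
apply/le_anti; rewrite !leUx h2 leUr (le_trans xleb (leUl _ _)) leUr //.
Qed.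

Variable ps : {set R * R}.
Hypothesis H : cong_on S ps.

Lemma P1 a : a \in S -> (a, a) \in ps. Proof. by case: H => h _ _ _; apply: h. Qed.
Lemma P2 {a c} : (a, c) \in ps -> a \in S -> c \in S -> (c, a) \in ps.
Proof. by case: H => _ h _ _ ac aS cS; apply: h. Qed.
Lemma P3 {a c e} : (a, c) \in ps -> (c, e) \in ps -> a \in S -> c \in S -> e \in S -> (a, e) \in ps.
Proof. by case: H => _ _ h _ ac ce aS cS eS; apply: (h a c e). Qed.
Lemma P4I {a c} u : (a, c) \in ps -> a \in S -> c \in S -> u \in S -> (a `&` u, c `&` u) \in ps.
Proof. by case: H => _ _ _ h ac aS cS uS; case: (h a c u u) => //; apply: P1. Qed.
Lemma P4U {a c} u : (a, c) \in ps -> a \in S -> c \in S -> u \in S -> (a `|` u, c `|` u) \in ps.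
Proof. by case: H => _ _ _ h ac aS cS uS; case: (h a c u u) => //; apply: P1. Qed.
Lemma PC {p q r} : (p, r) \in ps -> p <= q -> q <= r -> p \in S -> q \in S -> r \in S -> (p, q) \in ps.
Proof. by move=> pr pq qr pS qS rS; apply: (cong_conv H pS qS rS pq qr pr). Qed.

Ltac mem := repeat first [ assumption | exact: (gm G) | exact: (gy G) | exact: (gb G)
                         | apply: SI' | apply: SU' ].

Definition Ex z := (((m, y) \in ps) && ((z, b) \in ps)) || (((y, b) \in ps) && ((z, m) \in ps)).

Lemma Ex_inv z z' : z \in S -> z' \in S -> (z, z') \in ps -> Ex z -> Ex z'.
Proof.
move=> zS z'S zz; case/orP=> /andP[h1 h2]; apply/orP; [left|right]; rewrite h1 /=;
  first [exact: (P3 (P2 zz zS z'S) h2 z'S zS (gb G)) | exact: (P3 (P2 zz zS z'S) h2 z'S zS (gm G))].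
Qed.

Lemma Ex_Ex a c : a \in S -> c \in S -> Ex a -> Ex c -> (a, c) \in ps.
Proof.
move=> aS cS /orP[]/andP[h1 h2] /orP[]/andP[h3 h4];
  eauto 6 using P2, P3.
Qed.


Definition rel a c := if a == x then (if c == x then true else Ex c)
                      else if c == x then Ex a else (a, c) \in ps.

Lemma relS a c : a \in S -> c \in S -> rel a c = ((a, c) \in ps).
Proof. by move=> aS cS; rewrite /rel !neqx. Qed.
Lemma relxS c : c \in S -> rel x c = Ex c.
Proof. by move=> cS; rewrite /rel eqxx neqx. Qed.
Lemma relSx a : a \in S -> rel a x = Ex a.
Proof. by move=> aS; rewrite /rel eqxx neqx. Qed.
Lemma relxx : rel x x. Proof. by rewrite /rel eqxx. Qed.

Lemma L1 a c : a \in S -> c \in S -> (a, c) \in ps -> x <= a -> ~~ (x <= c) -> Ex (m `&` c).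
Proof.
move=> aS cS ac xa xc; have ba := gup G aS xa.
have h1 : (c `&` b, b) \in ps.
  by have := P4I (u:=b) (P2 ac aS cS) cS aS bS; rewrite (meet_r ba).
have cby : c `&` b <= y by rewrite meetC (gi G cS xc).
have h2 : (c `&` b, y) \in ps by apply: (PC h1) => //; try by mem; exact: yleb.
have h3 : (y, b) \in ps by eauto 6 using P2, P3, SI'.
have h4 : (m `&` c, m) \in ps.
  have := P4I (u:=m) (P2 ac aS cS) cS aS mS; rewrite (meet_r (le_trans mlex xa)) meetC //.
by rewrite /Ex h3 h4 orbT.
Qed.


Lemma L1j a c : a \in S -> c \in S -> (a, c) \in ps -> a <= x -> ~~ (c <= x) -> Ex (b `|` c).
Proof.
move=> aS cS ac ax cx; have am := gdn G aS ax.
have h1 : (m, c `|` m) \in ps.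
  by have := P4U (u:=m) ac aS cS mS; rewrite (join_r am).
have ymc : y <= c `|` m by rewrite joinC (gii G cS cx).
have h2 : (m, y) \in ps by apply: (PC h1) => //; try by mem; exact: mley.
have h3 : (b `|` c, b) \in ps.
  have := P4U (u:=b) (P2 ac aS cS) cS aS bS.
  by rewrite (join_r (le_trans am mleb)) joinC.
by rewrite /Ex h2 h3.
Qed.

Lemma m_ccx a c : a \in S -> c \in S -> (a, c) \in ps -> rel (a `&` x) (c `&` x).
Proof.
move=> aS cS ac; rewrite ![_ `&` x]meetC !meetx //.
case: (boolP (x <= a)) => xa; case: (boolP (x <= c)) => xc.
- exact: relxx.
- by rewrite relxS ?SI' // (L1 aS cS ac xa xc).
- by rewrite relSx ?SI' // (L1 cS aS (P2 ac aS cS) xc xa).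
- by rewrite relS ?SI' // meetC [m `&` c]meetC; apply: P4I.
Qed.

Lemma j_ccx a c : a \in S -> c \in S -> (a, c) \in ps -> rel (a `|` x) (c `|` x).
Proof.
move=> aS cS ac; rewrite ![_ `|` x]joinC !joinx //.
case: (boolP (a <= x)) => xa; case: (boolP (c <= x)) => xc.
- exact: relxx.
- by rewrite relxS ?SU' // (L1j aS cS ac xa xc).
- by rewrite relSx ?SU' // (L1j cS aS (P2 ac aS cS) xc xa).
- by rewrite relS ?SU' // joinC [b `|` c]joinC; apply: P4U.
Qed.

Lemma m_xc c u : c \in S -> u \in S -> Ex c -> rel (x `&` u) (c `&` u).
Proof.
move=> cS uS Ec; rewrite meetx //; case: (boolP (x <= u)) => xu.
  have bu := gup G uS xu; rewrite relxS ?SI' //.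
  case/orP: Ec => /andP[h1 h2]; rewrite /Ex.
    by have := P4I (u:=u) h2 cS bS uS; rewrite (meet_l bu) => ->; rewrite h1.
  by have := P4I (u:=u) h2 cS mS uS; rewrite (meet_l (le_trans mleb bu)) => ->; rewrite h1 orbT.
rewrite relS ?SI' //.
have e : y `&` u = b `&` u.
  apply/le_anti; rewrite !lexI !leIr !andbT (le_trans (leIl _ _) yleb) /=.
  by apply: (gi G).
case/orP: Ec => /andP[h1 h2].
  have k1 := P4I (u:=u) h1 mS yS uS; have k2 := P4I (u:=u) h2 cS bS uS.
  rewrite e in k1.
  have : m `&` u \in S by mem.
  have : b `&` u \in S by mem.
  have : c `&` u \in S by mem.
  eauto 6 using P2, P3.
have k2 := P4I (u:=u) h2 cS mS uS.
by apply: (P2 k2); mem.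
Qed.

Lemma m_xcx c : c \in S -> Ex c -> rel x (c `&` x).
Proof.
move=> cS Ec; rewrite meetC meetx //; case: (boolP (x <= c)) => xc; first exact: relxx.
rewrite relxS ?SI' //; rewrite /Ex.
case/orP: Ec => /andP[h1 h2].
  have k1 : (c `&` b, b) \in ps by have := P4I (u:=b) h2 cS bS bS; rewrite meetxx.
  have cby : c `&` b <= y by rewrite meetC (gi G cS xc).
  have k2 : (c `&` b, y) \in ps by apply: (PC k1) => //; try by mem; exact: yleb.
  have k3 : (y, b) \in ps by eauto 6 using P2, P3, SI'.
  have k4 : (m `&` c, m) \in ps.
    by have := P4I (u:=m) h2 cS bS mS; rewrite (meet_r mleb) meetC.
  by rewrite k3 k4 orbT.
have k4 : (m `&` c, m) \in ps.
  by have := P4I (u:=m) h2 cS mS mS; rewrite meetxx meetC.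
by rewrite h1 k4 orbT.
Qed.

Lemma j_xc c u : c \in S -> u \in S -> Ex c -> rel (x `|` u) (c `|` u).
Proof.
move=> cS uS Ec; rewrite joinx //; case: (boolP (u <= x)) => ux.
  have um := gdn G uS ux; rewrite relxS ?SU' //.
  case/orP: Ec => /andP[h1 h2]; rewrite /Ex.
    by have := P4U (u:=u) h2 cS bS uS; rewrite (join_l (le_trans um mleb)) => ->; rewrite h1.
  by have := P4U (u:=u) h2 cS mS uS; rewrite (join_l um) => ->; rewrite h1 orbT.
rewrite relS ?SU' //.
case/orP: Ec => /andP[h1 h2].
  have k2 := P4U (u:=u) h2 cS bS uS.
  by apply: (P2 k2); mem.
have e : m `|` u = y `|` u.
  apply/le_anti; rewrite !leUx !leUr !andbT (le_trans mley (leUl _ _)) /=.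
  by apply: (gii G).
have k1 := P4U (u:=u) h1 yS bS uS; have k2 := P4U (u:=u) h2 cS mS uS.
rewrite e in k2.
have : y `|` u \in S by mem.
have : b `|` u \in S by mem.
have : c `|` u \in S by mem.
eauto 6 using P2, P3.
Qed.

Lemma j_xcx c : c \in S -> Ex c -> rel x (c `|` x).
Proof.
move=> cS Ec; rewrite joinC joinx //; case: (boolP (c <= x)) => xc; first exact: relxx.
rewrite relxS ?SU' //; rewrite /Ex.
case/orP: Ec => /andP[h1 h2].
  have k : (c `|` b, b) \in ps by have := P4U (u:=b) h2 cS bS bS; rewrite joinxx.
  by rewrite h1 joinC k.
have k1 : (c `|` m, m) \in ps by have := P4U (u:=m) h2 cS mS mS; rewrite joinxx.
have ymc : y <= c `|` m by rewrite joinC (gii G cS xc).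
have k2 : (m, y) \in ps by apply: (PC (P2 k1 _ _)) => //; try by mem; exact: mley.
have k3 : (b `|` c, b) \in ps.
  by have := P4U (u:=b) h2 cS mS bS; rewrite (join_r mleb) joinC.
by rewrite k2 k3.
Qed.


Lemma S'I a c : a \in x |: S -> c \in x |: S -> a `&` c \in x |: S.
Proof.
have h c' : c' \in S -> x `&` c' \in x |: S.
  move=> cS; rewrite meetx //; case: ifP => _; first exact: setU11.
  by apply/setU1r; mem.
case/setU1P=> [->|aS]; case/setU1P=> [->|cS].
- by rewrite meetxx setU11.
- exact: h.
- by rewrite meetC h.
- by apply/setU1r; mem.
Qed.

Lemma S'U a c : a \in x |: S -> c \in x |: S -> a `|` c \in x |: S.
Proof.
have h c' : c' \in S -> x `|` c' \in x |: S.
  move=> cS; rewrite joinx //; case: ifP => _; first exact: setU11.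
  by apply/setU1r; mem.
case/setU1P=> [->|aS]; case/setU1P=> [->|cS].
- by rewrite joinxx setU11.
- exact: h.
- by rewrite joinC h.
- by apply/setU1r; mem.
Qed.

Lemma rel_refl a : a \in x |: S -> rel a a.
Proof. by case/setU1P=> [->|aS]; [exact: relxx | rewrite relS //; apply: P1]. Qed.

Lemma rel_sym a c : a \in x |: S -> c \in x |: S -> rel a c -> rel c a.
Proof.
case/setU1P=> [->|aS]; case/setU1P=> [->|cS] //.
- by rewrite relxS // relSx.
- by rewrite relxS // relSx.
- by rewrite !relS //; move=> h; apply: P2.
Qed.

Lemma rel_trans a c e : a \in x |: S -> c \in x |: S -> e \in x |: S ->
  rel a c -> rel c e -> rel a e.
Proof.
move=> aS' cS' eS'; case/setU1P: cS' => [->|cS].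
  case/setU1P: aS' => [->|aS] //; case/setU1P: eS' => [->|eS] //.
  by rewrite relSx // relxS // relS // => ha he; apply: Ex_Ex.
case/setU1P: aS' => [->|aS]; case/setU1P: eS' => [->|eS].
- by move=> *; apply: relxx.
- by rewrite !relxS // relS // => Ec ce; apply: (Ex_inv cS eS ce Ec).
- by rewrite relSx // relS // relSx // => ac Ec; apply: (Ex_inv cS aS (P2 ac aS cS) Ec).
- by rewrite !relS // => ac ce; apply: P3 ac ce aS cS eS.
Qed.

Lemma rel_meet_x c u : c \in S -> u \in x |: S -> Ex c -> rel (x `&` u) (c `&` u).
Proof.
move=> cS; case/setU1P=> [->|uS] Ec; last exact: m_xc.
by rewrite meetxx; apply: m_xcx.
Qed.

Lemma rel_join_x c u : c \in S -> u \in x |: S -> Ex c -> rel (x `|` u) (c `|` u).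
Proof.
move=> cS; case/setU1P=> [->|uS] Ec; last exact: j_xc.
by rewrite joinxx; apply: j_xcx.
Qed.

Lemma rel_meet1 a c u : a \in x |: S -> c \in x |: S -> u \in x |: S ->
  rel a c -> rel (a `&` u) (c `&` u).
Proof.
move=> aS' cS' uS'; case/setU1P: (aS') => [ea|aS]; case/setU1P: (cS') => [ec|cS].
- by rewrite ea ec => _; apply: rel_refl; apply: S'I => //; exact: setU11.
- by rewrite ea relxS // => Ec; apply: rel_meet_x.
- rewrite ec relSx // => Ea; apply: rel_sym; try by apply: S'I => //; exact: setU11.
  exact: rel_meet_x.
- rewrite relS // => ac; case/setU1P: uS' => [->|uS]; first exact: m_ccx.
  by rewrite relS ?SI' //; apply: P4I.
Qed.

Lemma rel_join1 a c u : a \in x |: S -> c \in x |: S -> u \in x |: S ->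
  rel a c -> rel (a `|` u) (c `|` u).
Proof.
move=> aS' cS' uS'; case/setU1P: (aS') => [ea|aS]; case/setU1P: (cS') => [ec|cS].
- by rewrite ea ec => _; apply: rel_refl; apply: S'U => //; exact: setU11.
- by rewrite ea relxS // => Ec; apply: rel_join_x.
- rewrite ec relSx // => Ea; apply: rel_sym; try by apply: S'U => //; exact: setU11.
  exact: rel_join_x.
- rewrite relS // => ac; case/setU1P: uS' => [->|uS]; first exact: j_ccx.
  by rewrite relS ?SU' //; apply: P4U.
Qed.

Definition ext : {set R * R} := [set p | rel p.1 p.2].

Lemma ext_cong : cong_on (x |: S) ext.
Proof.
split=> [a aS|a c aS cS|a c e aS cS eS|a c u v aS cS uS vS]; rewrite !inE /=.
- exact: rel_refl.
- exact: rel_sym.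
- exact: rel_trans.
move=> ac uv; split.
  apply: (@rel_trans _ (c `&` u)); rewrite ?S'I //; first exact: rel_meet1.
  by rewrite ![c `&` _]meetC; apply: rel_meet1.
apply: (@rel_trans _ (c `|` u)); rewrite ?S'U //; first exact: rel_join1.
by rewrite ![c `|` _]joinC; apply: rel_join1.
Qed.

Lemma ext_agree a c : a \in S -> c \in S -> ((a, c) \in ext) = ((a, c) \in ps).
Proof. by move=> aS cS; rewrite inE /= relS. Qed.

End Step.


Section Step2.
Variables (S : {set R}) (x m y b : R).
Hypothesis G : good S x m y b.
Hypothesis subS : sub S.

Lemma sub_ext : sub (x |: S).
Proof.
have [S0 S1 _] := subS; split; rewrite ?setU1r //.
by move=> a c aS cS; split; [apply: (S'I G subS) | apply: (S'U G subS)].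
Qed.

Lemma cp_ext : cp S -> cp (x |: S).
Proof.
move=> cpS a c; case/setU1P=> [->|aS]; case/setU1P=> [->|cS].
- by rewrite ltxx.
- move=> xc h; have bc := gup G cS (ltW xc).
  case: (eqVneq b c) => [e|nbc]; first by rewrite -e; exact: (gxb G).
  exfalso; apply: (h b); rewrite ?setU1r ?(gb G) ?(covers_lt (gxb G)) //.
  by rewrite lt_neqAle nbc bc.
- move=> ax h; have am := gdn G aS (ltW ax).
  case: (eqVneq a m) => [e|nam]; first by rewrite e; exact: (gmx G).
  exfalso; apply: (h m); rewrite ?setU1r ?(gm G) ?(covers_lt (gmx G)) //.
  by rewrite lt_neqAle nam am.
- move=> ac h; apply: cpS => // z zS; apply: h; exact: setU1r.
Qed.

Lemma charx th z : is_congruence th -> z \in S -> ((x, z) \in th) = Ex m y b th z.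
Proof.
move=> C zS; have CT := cong_onT [set: R] C.
case: C => r s t c.
have xleb := xleb G; have mlex := mlex G; have mley := mley G.
have PC' p q w : (p, w) \in th -> p <= q -> q <= w -> (p, q) \in th.
  by move=> pw pq qw; apply: (cong_conv CT (in_setT p) (in_setT q) (in_setT w) pq qw pw).
apply/idP/idP => [xz|].
  case: (boolP (z <= x)) => zx.
    have zm := gdn G zS zx.
    have zm' : (z, m) \in th by apply: (PC' _ _ x) => //; apply: s.
    have mx : (m, x) \in th by apply: t (s _ _ zm') (s _ _ xz).
    have := proj2 (c _ _ _ _ mx (r y)); rewrite (join_r mley) (gjoin G) => yb.
    by rewrite /Ex yb zm' orbT.
  have h := proj2 (c _ _ _ _ (r x) xz); rewrite joinxx (joinx G zS) (negbTE zx) in h.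
  have xb : (x, b) \in th by apply: (PC' _ _ _ h xleb); apply: leUl.
  have := proj1 (c _ _ _ _ xb (r y)); rewrite (gmeet G) (meet_r (yleb G)) => my.
  by rewrite /Ex my (t _ _ _ (s _ _ xz) xb).
case/orP=> /andP[h1 h2].
  have := proj2 (c _ _ _ _ h1 (r x)); rewrite (join_r mlex) joinC (gjoin G) => xb.
  by apply: t xb (s _ _ h2).
have := proj1 (c _ _ _ _ h1 (r x)); rewrite meetC (gmeet G) (meet_r xleb) => mx.
by apply: t (s _ _ mx) (s _ _ h2).
Qed.

End Step2.


Lemma step_card (S : {set R}) x n : x \notin S -> #|~: S| = n.+1 -> #|~: (x |: S)| = n.
Proof.
move=> xS hS; move: (cardsC S) (cardsC (x |: S)); rewrite cardsU1 xS hS /=.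
lia.
Qed.

Lemma full_set (S : {set R}) : #|~: S| = 0 -> S = [set: R].
Proof. by move=> h; rewrite -[S]setCK (cards0_eq h) setC0. Qed.

Lemma L0_ext (S : {set R}) x : L0 \subset S -> L0 \subset x |: S.
Proof. by move=> h; apply/subsetP=> z /(subsetP h) zS; apply: setU1r. Qed.

Lemma ext_main n : forall S : {set R}, #|~: S| = n -> L0 \subset S -> sub S -> cp S ->
  forall ps, cong_on S ps -> exists2 th, is_congruence th &
    forall a c, a \in S -> c \in S -> ((a, c) \in th) = ((a, c) \in ps).
Proof.
elim: n => [|n IH] S hS L0S sS cS ps Hps.
  have ST := full_set hS; exists ps => //; apply: congT; by rewrite -ST.
have [x0 x0S] : exists x0, x0 \in ~: S by apply/card_gt0P; rewrite hS.
rewrite inE in x0S.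
have [x [m [y [b G]]]] := choose_x L0S sS cS (ex_intro _ x0 x0S).
have [th Cth agr] := IH _ (step_card (gx G) hS) (L0_ext x L0S) (sub_ext G sS)
                        (cp_ext G cS) _ (ext_cong G sS Hps).
exists th => // a c aS cS'.
by rewrite agr ?setU1r // (ext_agree G _ aS cS').
Qed.

Lemma inj_main n : forall S : {set R}, #|~: S| = n -> L0 \subset S -> sub S -> cp S ->
  forall th1 th2, is_congruence th1 -> is_congruence th2 ->
    (forall a c, a \in S -> c \in S -> ((a, c) \in th1) = ((a, c) \in th2)) -> th1 = th2.
Proof.
elim: n => [|n IH] S hS L0S sS cS th1 th2 C1 C2 agr.
  have ST := full_set hS; apply/setP=> [[a c]]; apply: agr; by rewrite ST in_setT.
have [x0 x0S] : exists x0, x0 \in ~: S by apply/card_gt0P; rewrite hS.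
rewrite inE in x0S.
have [x [m [y [b G]]]] := choose_x L0S sS cS (ex_intro _ x0 x0S).
apply: (IH _ (step_card (gx G) hS) (L0_ext x L0S) (sub_ext G sS) (cp_ext G cS)) => //.
have E z : z \in S -> ((x, z) \in th1) = ((x, z) \in th2).
  move=> zS; rewrite (charx G C1 zS) (charx G C2 zS) /Ex.
  by rewrite !agr ?(gm G) ?(gy G) ?(gb G).
have sym th u v : is_congruence th -> ((u, v) \in th) = ((v, u) \in th).
  by case=> _ s _ _; apply/idP/idP; apply: s.
move=> a c; case/setU1P=> [->|aS]; case/setU1P=> [->|cS'].
- by case: C1 => r1 _ _ _; case: C2 => r2 _ _ _; rewrite r1 r2.
- exact: E.
- by rewrite (sym _ _ _ C1) (sym _ _ _ C2) E.
- exact: agr.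
Qed.

End Main.


Section CJ.
Context {d : Order.disp_t} {T : finTBLatticeType d}.

Lemma cj_mem (th1 th2 : {set T * T}) (p : T * T) :
  reflect (forall g : {set T * T}, th1 :|: th2 \subset g -> is_congruence g -> p \in g)
          (p \in cong_join th1 th2).
Proof.
rewrite inE; apply: (iffP forallP) => [h g sg cg | h g].
  have h1 : [forall q, (q \in th1 :|: th2) ==> (q \in g)].
    by apply/forallP=> q; apply/implyP=> hq; apply: (subsetP sg).
  move: (h g); rewrite h1 /= => /implyP; apply.
  case: cg => r s t c.
  apply/andP; split; first (apply/andP; split; first (apply/andP; split)).
  - by apply/forallP=> x; apply: r.
  - by apply/forallP=> x; apply/forallP=> y; apply/implyP; apply: s.
  - by apply/forallP=> x; apply/forallP=> y; apply/forallP=> z; apply/implyP=> /andP[]; apply: t.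
  - apply/forallP=> x; apply/forallP=> y; apply/forallP=> u; apply/forallP=> v.
    by apply/implyP=> /andP[k1 k2]; case: (c _ _ _ _ k1 k2) => -> ->.
apply/implyP=> /forallP sg; apply/implyP=> /andP[/andP[/andP[/forallP r /forallP s] /forallP t] /forallP c].
apply: h.
  by apply/subsetP=> q hq; move/implyP: (sg q); apply.
split.
- by move=> x; apply: r.
- by move=> x y h1; move: (s x) => /forallP /(_ y) /implyP; apply.
- move=> x y z h1 h2; move: (t x) => /forallP /(_ y) /forallP /(_ z) /implyP; apply.
  by rewrite h1 h2.
- move=> x y u v h1 h2; move: (c x) => /forallP /(_ y) /forallP /(_ u) /forallP /(_ v) /implyP.
  by rewrite h1 h2 => /(_ isT) /andP[].
Qed.
Lemma cj_cong (th1 th2 : {set T * T}) : is_congruence (cong_join th1 th2).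
Proof.
split.
- by move=> x; apply/cj_mem=> g _ [r _ _ _].
- move=> x y /cj_mem h; apply/cj_mem=> g sg cg; case: (cg) => _ s _ _.
  by apply: s; apply: h g sg cg.
- move=> x y z /cj_mem h1 /cj_mem h2; apply/cj_mem=> g sg cg; case: (cg) => _ _ t _.
  by apply: t (h1 g sg cg) (h2 g sg cg).
- move=> x y u v /cj_mem h1 /cj_mem h2.
  have K (g : {set T * T}) : th1 :|: th2 \subset g -> is_congruence g ->
     ((x `&` u, y `&` v) \in g) /\ ((x `|` u, y `|` v) \in g).
    by move=> sg cg; case: (cg) => _ _ _ c; apply: c (h1 g sg cg) (h2 g sg cg).
  by split; apply/cj_mem=> g sg cg; case: (K g sg cg).
Qed.
Lemma cj_sup (th1 th2 : {set T * T}) (p : T * T) : p \in th1 :|: th2 -> p \in cong_join th1 th2.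
Proof. move=> hp; apply/cj_mem=> g sg _. exact: (subsetP sg p hp). Qed.

Lemma cong_I (th1 th2 : {set T * T}) : is_congruence th1 -> is_congruence th2 ->
  is_congruence (th1 :&: th2).
Proof.
case=> r1 s1 t1 c1 [r2 s2 t2 c2]; split.
- by move=> x; rewrite inE; apply/andP; split; [apply: r1|apply: r2].
- move=> x y; rewrite !inE => /andP[h1 h2]; apply/andP; split; [exact: s1 | exact: s2].
- move=> x y z; rewrite !inE => /andP[h1 h2] /andP[h3 h4].
  by apply/andP; split; [exact: t1 h1 h3 | exact: t2 h2 h4].
- move=> x y u v; rewrite !inE => /andP[h1 h2] /andP[h3 h4].
  case: (c1 _ _ _ _ h1 h3) => k1 k2; case: (c2 _ _ _ _ h2 h4) => k3 k4.
  by split; apply/andP; split.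
Qed.

End CJ.


Section Final.
Context {dL dR : Order.disp_t} {L : finTBLatticeType dL} {R : finTBLatticeType dR} (f : L -> R).
Hypothesis finj : injective f.
Hypothesis fhom : forall x y : L, f (x `&` y) = f x `&` f y /\ f (x `|` y) = f x `|` f y.
Hypothesis fbot : f \bot = \bot.
Hypothesis ftop : f \top = \top.
Hypothesis fcov : forall x y : L, covers x y -> covers (f x) (f y).
Hypothesis semi : semimodular (T := R).
Hypothesis hcR : forall x : R, (exists2 y : R, covers y x & y \notin codom f) ->
  (#|lower_covers x| <= 2)%N.

Definition L0 : {set R} := [set t | t \in codom f].

Lemma fI (x y : L) : f (x `&` y) = f x `&` f y. Proof. by case: (fhom x y). Qed.
Lemma fU (x y : L) : f (x `|` y) = f x `|` f y. Proof. by case: (fhom x y). Qed.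

Lemma fle (x y : L) : (f x <= f y) = (x <= y).
Proof.
apply/idP/idP => h; last by move/meet_idPl: h => <-; rewrite fI leIr.
by apply/meet_idPl; apply: finj; rewrite fI; apply/meet_idPl.
Qed.

Lemma flt (x y : L) : (f x < f y) = (x < y).
Proof. by rewrite !lt_neqAle fle (inj_eq finj). Qed.

Lemma hc0 : forall t : R, (exists2 w, covers w t & w \notin L0) ->
  (#|lower_covers t| <= 2)%N.
Proof. by move=> t [w h1 h2]; apply: hcR; exists w; rewrite // inE in h2. Qed.

Lemma subL0 : sub L0.
Proof.
split; rewrite ?inE -?fbot -?ftop ?codom_f //.
move=> a c; rewrite !inE => /codomP[a' ->] /codomP[c' ->].
by rewrite -fI -fU !codom_f.
Qed.

Lemma cpL0 : cp L0.
Proof.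
move=> a c; rewrite !inE => /codomP[a' ->] /codomP[c' ->] lt h.
apply: fcov; apply/coversP; split; first by rewrite -flt.
by move=> z' az zc; apply: (h (f z')); rewrite ?inE ?codom_f ?flt.
Qed.

Lemma restr_cong th : is_congruence th -> is_congruence (restrict_cong f th).
Proof.
case=> r s t c; split.
- by move=> x; rewrite inE /=; apply: r.
- by move=> x y; rewrite !inE /=; apply: s.
- by move=> x y z; rewrite !inE /=; apply: t.
- by move=> x y u v; rewrite !inE /= => h1 h2; rewrite !fI !fU; apply: c.
Qed.

Lemma restr_inj th1 th2 : is_congruence th1 -> is_congruence th2 ->
  restrict_cong f th1 = restrict_cong f th2 -> th1 = th2.
Proof.
move=> C1 C2 e.
apply: (@inj_main _ R semi L0 hc0 #|~: L0| L0 (erefl _) (subxx _) subL0 cpL0) => //.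
move=> a c; rewrite !inE => /codomP[a' ->] /codomP[c' ->].
by move/setP: e => /(_ (a', c')); rewrite !inE /=.
Qed.

Lemma restr_surj ps : is_congruence ps ->
  exists2 th, is_congruence th & restrict_cong f th = ps.
Proof.
move=> [r s t c].
pose g := fun q : L * L => (f q.1, f q.2).
have ginj : injective g by move=> [a b] [a' b'] /= [/finj -> /finj ->].
pose psi := g @: ps.
have mem a a' : ((f a, f a') \in psi) = ((a, a') \in ps).
  by rewrite -(mem_imset _ _ ginj).
have Cpsi : cong_on L0 psi.
  split.
  - by move=> a; rewrite inE => /codomP[a' ->]; rewrite mem; apply: r.
  - by move=> a a2; rewrite !inE => /codomP[a' ->] /codomP[a2' ->]; rewrite !mem; apply: s.
  - move=> a a2 a3; rewrite !inE => /codomP[a' ->] /codomP[a2' ->] /codomP[a3' ->].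
    by rewrite !mem; apply: t.
  - move=> a a2 a3 a4; rewrite !inE => /codomP[a' ->] /codomP[a2' ->] /codomP[a3' ->] /codomP[a4' ->].
    by rewrite -!fI -!fU !mem; apply: c.
have [th Cth agr] := @ext_main _ R semi L0 hc0 #|~: L0| L0 (erefl _) (subxx _) subL0 cpL0 _ Cpsi.
exists th => //; apply/setP=> [[a a']]; by rewrite inE /= agr ?inE ?codom_f // mem.
Qed.

Lemma restr_meet th1 th2 :
  restrict_cong f (cong_meet th1 th2) = cong_meet (restrict_cong f th1) (restrict_cong f th2).
Proof. by apply/setP=> p; rewrite !inE. Qed.

Lemma restr_le th1 th2 : is_congruence th1 -> is_congruence th2 ->
  restrict_cong f th1 \subset restrict_cong f th2 -> th1 \subset th2.
Proof.
move=> C1 C2 sub12.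
have e : th1 :&: th2 = th1.
  apply: (restr_inj (cong_I C1 C2) C1).
  apply/setP=> p; rewrite !inE; apply: andb_idr => h.
  by move/subsetP: sub12 => /(_ p); rewrite !inE; apply.
by rewrite -e subsetIr.
Qed.

Lemma memR th (q : L * L) : (q \in restrict_cong f th) = ((f q.1, f q.2) \in th).
Proof. by rewrite inE. Qed.

Lemma restr_join th1 th2 : is_congruence th1 -> is_congruence th2 ->
  restrict_cong f (cong_join th1 th2) = cong_join (restrict_cong f th1) (restrict_cong f th2).
Proof.
move=> C1 C2; apply/setP=> p; apply/idP/idP.
  rewrite memR => hp; apply/cj_mem=> g sg cg.
  have [tg Ctg etg] := restr_surj cg.
  have s1 : th1 :|: th2 \subset tg.
    rewrite subUset; apply/andP; split; apply: restr_le => //; rewrite etg;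
      apply: subset_trans sg; [apply: subsetUl | apply: subsetUr].
  by move/cj_mem: hp => /(_ tg s1 Ctg); rewrite -etg memR.
move/cj_mem=> hp; apply: hp; last by apply: restr_cong; apply: cj_cong.
rewrite subUset; apply/andP; split; apply/subsetP=> q; rewrite !memR => hq;
  apply: cj_sup; rewrite in_setU hq ?orbT //.
Qed.

End Final.

Unset Implicit Arguments.
Local Close Scope order_scope.

Theorem mainTheorem2 (dL dR : Order.disp_t)
    (L : finTBLatticeType dL) (R : finTBLatticeType dR) (f : L -> R) :
  planar_lattice L -> semimodular (T := L) -> (2 < #|L|)%N ->
  rectangular_extension f ->
  congruence_preserving_ext f.
Proof.
move=> _ _ _ [[semi _] [finj fhom] [fbot ftop] fcov hcR].
split.
- exact: restr_cong.
- by move=> th1 th2 C1 C2; apply: (restr_inj finj fhom fbot ftop fcov semi hcR).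
- by move=> ps Cps; apply: (restr_surj finj fhom fbot ftop fcov semi hcR).
- by move=> *; apply: restr_meet.
- by move=> th1 th2 C1 C2; apply: (restr_join finj fhom fbot ftop fcov semi hcR).
Qed.
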